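(* Let $\mathcal{P}\subseteq\mathbb{Z}_{\geq0}$ with $0\in\mathcal{P}$, working with formal power series over a commutative ring $R\supseteq\mathbb{Q}$. Then $F^{\mathcal{P}}(z)=z\frac{\partial}{\partial z}\ln T^\mathcal{P}(z)$, i.e. $F^\mathcal{P}(z)=z\,\frac{\partial}{\partial z}T^\mathcal{P}(z)\big/T^\mathcal{P}(z)$, and for every $n\ge0$, $$[z^n]\,F^\mathcal{P}(z) = [z^n]\,e_\mathcal{P}(z)^n.$$
   Context: $[n]=\{1,\dots,n\}$; $[z^n]g$ is the coefficient of $z^n$. $e_\mathcal{P}(z)=\sum_{n\in\mathcal{P}}z^n/n!$. $T^\mathcal{P}(z)=\sum_t z^{|t|}/|t|!$ over labeled rooted trees $t$ (trees on vertex set $[|t|]$ with a distinguished root) in which every vertex has a number of children (neighbours farther from the root) in $\mathcal{P}$; since $0\in\mathcal{P}$, $T^\mathcal{P}(z)=z\cdot(\text{invertible series})$, so the quotient is a formal (Laurent) power series. $F^\mathcal{P}(z)=\sum_{n\ge0}c_nz^n/n!$ where $c_n$ is the number of functions $f:[n]\to[n]$ with $|f^{-1}(x)|\in\mathcal{P}$ for all $x\in[n]$ ($c_0=1$). *)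

(* Defs.v *)
From mathcomp Require Import all_boot all_order all_algebra.
Set Implicit Arguments. Unset Strict Implicit. Unset Printing Implicit Defensive.
Import GRing.Theory.
Local Open Scope ring_scope.

(* Formal power series over R, represented by their coefficient sequence:
   a : nat -> R stands for sum_n a n z^n. *)
Definition sone (R : nzRingType) : nat -> R := fun n => if n == 0%N then 1 else 0.
Definition sX (R : nzRingType) : nat -> R := fun n => if n == 1%N then 1 else 0.
Definition smul (R : nzRingType) (a b : nat -> R) : nat -> R :=
  fun n => \sum_(i < n.+1) a i * b (n - i)%N.
Definition spow (R : nzRingType) (a : nat -> R) (k : nat) : nat -> R :=
  iter k (smul a) (@sone R).
Definition sderiv (R : nzRingType) (a : nat -> R) : nat -> R :=
  fun n => n.+1%:R * a n.+1.

Definition eP (R : unitRingType) (P : pred nat) : nat -> R :=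
  fun n => if P n then (n`!%:R)^-1 else 0.

(* Labeled rooted trees on vertex set 'I_n (= [n] shifted to {0..n-1}),
   encoded by their parent function: par x = None iff x is the root,
   par x = Some y iff y is the neighbour of x on the path to the root. *)
Definition is_rooted_tree (n : nat) (par : {ffun 'I_n -> option 'I_n}) : bool :=
  (#|[set x | par x == None]| == 1%N) &&
  [forall x, iter n (obind par) (Some x) == None].

Definition nchildren (n : nat) (par : {ffun 'I_n -> option 'I_n}) (x : 'I_n) : nat :=
  #|[set y | par y == Some x]|.

Definition tree_count (P : pred nat) (n : nat) : nat :=
  #|[set par : {ffun 'I_n -> option 'I_n} |
      is_rooted_tree par && [forall x, P (nchildren par x)]]|.

Definition TP (R : unitRingType) (P : pred nat) : nat -> R :=
  fun n => (tree_count P n)%:R / (n`!)%:R.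

Definition fun_count (P : pred nat) (n : nat) : nat :=
  #|[set f : {ffun 'I_n -> 'I_n} | [forall x, P #|[set y | f y == x]|]]|.

Definition FP (R : unitRingType) (P : pred nat) : nat -> R :=
  fun n => (fun_count P n)%:R / (n`!)%:R.

(* Main.v *)
Require Import Defs.
From mathcomp Require Import all_boot all_order all_algebra.
From mathcomp Require Import zify.
From Stdlib Require Import FunctionalExtensionality.
Set Implicit Arguments. Unset Strict Implicit. Unset Printing Implicit Defensive.

Section Comb.
Variable D : finType.
Implicit Types (par : {ffun D -> option D}) (A : {set D}).

Lemma iterN (par : D -> option D) m : iter m (obind par) None = None.
Proof. by elim: m => //= m ->. Qed.

Lemma iter_none (par : D -> option D) x k :
  iter k (obind par) (Some x) = None -> iter #|D| (obind par) (Some x) = None.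
Proof.
move=> hk.
have exk : exists k, iter k (obind par) (Some x) == None by exists k; rewrite hk.
case: (ex_minnP exk) => k0 /eqP Hk0 Hmin.
have notN : forall j, (j < k0)%N -> iter j (obind par) (Some x) = Some (odflt x (iter j (obind par) (Some x))).
  move=> j hj; case E: (iter j (obind par) (Some x)) => [z|] //.
  by have := Hmin j; rewrite E eqxx => /(_ isT); rewrite leqNgt hj.
pose h (j : 'I_k0) := odflt x (iter j (obind par) (Some x)).
have inj_h : injective h.
  have key : forall i j : 'I_k0, (i < j)%N -> h i = h j -> False.
    move=> i j lij hij.
    have E : iter i (obind par) (Some x) = iter j (obind par) (Some x).
      by rewrite (notN i) ?ltn_ord // (notN j) ?ltn_ord // -/(h i) -/(h j) hij.
    have : iter (k0 - j + i) (obind par) (Some x) = None.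
      by rewrite iterD E -iterD subnK // ltnW.
    move/eqP/Hmin; rewrite leqNgt => /negP; apply.
    by have := ltn_ord j; lia.
  move=> i j hij; apply/eqP; case: (ltngtP i j) => [lt|lt|/val_inj -> //].
    by case: (key _ _ lt hij).
  by case: (key _ _ lt (esym hij)).
have := @leq_card _ _ h inj_h; rewrite card_ord => hle.
by rewrite -(subnK hle) iterD Hk0 iterN.
Qed.

Lemma path_agree (par1 par2 : D -> option D) i x :
  (forall y, par1 y != Some i) -> (forall z, z != i -> par2 z = par1 z) -> x != i ->
  forall k, iter k (obind par2) (Some x) = iter k (obind par1) (Some x).
Proof.
move=> h1 h2 hx.
suff: forall k, iter k (obind par2) (Some x) = iter k (obind par1) (Some x) /\
                 iter k (obind par1) (Some x) != Some i by move=> H k; case: (H k).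
elim=> [|k [IH1 IH2]] /=; first by split=> //; apply/negP => /eqP [] /eqP; apply/negP.
rewrite IH1; case E: (iter k (obind par1) (Some x)) => [z|] //=.
rewrite h2 ?h1 //; apply/negP => /eqP hz; move: IH2; rewrite E hz eqxx.
by [].
Qed.


Definition tree_on A par : bool :=
  [forall x, (x \notin A) ==> (par x == None)] &&
  [forall x, forall y, (par x == Some y) ==> (y \in A)] &&
  (#|[set x in A | par x == None]| == 1%N) &&
  [forall x, iter #|D| (obind par) (Some x) == None].

Definition nch par x := #|[set y | par y == Some x]|.

Definition remv i par : {ffun D -> option D} := [ffun x => if x == i then None else par x].
Definition addv i j par : {ffun D -> option D} := [ffun x => if x == i then Some j else par x].

Lemma treeP A par : reflect
  [/\ forall x, x \notin A -> par x = None,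
      forall x y, par x = Some y -> y \in A,
      #|[set x in A | par x == None]| = 1%N &
      forall x, iter #|D| (obind par) (Some x) = None] (tree_on A par).
Proof.
apply: (iffP idP).
  case/andP=> [/andP[/andP[/forallP h1 /forallP h2] /eqP h3] /forallP h4]; split=> //.
  - by move=> x hx; apply/eqP; move: (h1 x); rewrite hx.
  - by move=> x y hxy; move: (h2 x) => /forallP /(_ y); rewrite hxy eqxx.
  - by move=> x; apply/eqP.
case=> h1 h2 h3 h4; apply/andP; split; last by apply/forallP=> x; rewrite h4.
apply/andP; split; last by rewrite h3.
apply/andP; split; apply/forallP => x.
  by apply/implyP => hx; rewrite h1.
by apply/forallP => y; apply/implyP => /eqP; apply: h2.
Qed.

Lemma nch_remv i par x : nch par x = nch (remv i par) x + (par i == Some x).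
Proof.
rewrite /nch (cardsD1 i) addnC; congr (_ + _); last by rewrite inE.
apply: eq_card => y; rewrite !inE ffunE.
by case: (y == i).
Qed.

Lemma nch_leaf par i y : nch par i = 0%N -> par y != Some i.
Proof.
move=> h; apply/negP => /eqP hy.
have : (0 < #|[set y | par y == Some i]|)%N by apply/card_gt0P; exists y; rewrite inE hy.
by rewrite -/(nch par i) h.
Qed.

Lemma nch_parent par i j : par i = Some j -> (0 < nch par j)%N.
Proof. by move=> h; rewrite card_gt0; apply/set0Pn; exists i; rewrite inE h. Qed.

Lemma loop_not_tree par a : par a = Some a -> iter #|D| (obind par) (Some a) <> None.
Proof.
move=> h; suff: forall k, iter k (obind par) (Some a) = Some a by move=> ->.
by elim=> //= k ->; rewrite /= h.
Qed.


Lemma leaf_not_root A par i : tree_on A par -> i \in A -> nch par i = 0%N ->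
  (1 < #|A|)%N -> par i != None.
Proof.
case/treeP => h1 h2 h3 h4 hi hl hA; apply/negP => /eqP hroot.
have : (0 < #|A :\ i|)%N by move: hA; rewrite (cardsD1 i A) hi.
case/card_gt0P => x; rewrite in_setD1 => /andP[hxi hxA].
move/eqP: h3 => /cards1P [r hr].
have root_i : forall z, z \in A -> par z = None -> z = i.
  move=> z hz hpz.
  have : z \in [set x in A | par x == None] by rewrite inE hz hpz eqxx.
  have : i \in [set x in A | par x == None] by rewrite inE hi hroot eqxx.
  by rewrite hr !inE => /eqP -> /eqP ->.
suff: forall k, exists z, iter k (obind par) (Some x) = Some z /\ z \in A /\ z != i.
  by case/(_ #|D|) => z [hz _]; rewrite h4 in hz.
elim=> [|k [z [hz [zA zi]]]]; first by exists x.
rewrite iterS hz /=.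
case E: (par z) => [w|]; last by move: zi; rewrite (root_i z zA E) eqxx.
exists w; split=> //; split; first exact: h2 E.
by apply/negP => /eqP wi; move: (nch_leaf z hl); rewrite E wi eqxx.
Qed.

Lemma remv_tree A par i j : tree_on A par -> i \in A -> nch par i = 0%N ->
  par i = Some j -> tree_on (A :\ i) (remv i par).
Proof.
case/treeP => h1 h2 h3 h4 hi hl hj; apply/treeP; split.
- move=> x; rewrite in_setD1 negb_and negbK ffunE; case: eqP => //= _ hx.
  exact: h1.
- move=> x y; rewrite ffunE; case: eqP => // /eqP xi hxy.
  rewrite in_setD1 (h2 _ _ hxy) andbT.
  by apply/negP => /eqP yi; move: (nch_leaf x hl); rewrite hxy yi eqxx.
- rewrite -h3; apply: eq_card => x; rewrite !inE ffunE.
  by case: eqP => [->|] //=; rewrite hj andbF.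
- move=> x; case: (eqVneq x i) => [->|xi].
    apply: (@iter_none _ _ 1); by rewrite /= ffunE eqxx.
  rewrite (path_agree (par1 := par) (i := i)) //.
  + by move=> y; apply: nch_leaf.
  + by move=> z zi; rewrite ffunE (negbTE zi).
Qed.

Lemma addv_tree A par i j : tree_on (A :\ i) par -> i \in A -> j \in A :\ i ->
  tree_on A (addv i j par).
Proof.
case/treeP => h1 h2 h3 h4 hi hj.
have pi : par i = None by apply: h1; rewrite in_setD1 eqxx.
have nopar : forall y, par y != Some i.
  by move=> y; apply/negP => /eqP /h2; rewrite in_setD1 eqxx.
have agree : forall x, x != i -> forall k,
    iter k (obind (addv i j par)) (Some x) = iter k (obind par) (Some x).
  by move=> x xi; apply: path_agree => // z zi; rewrite ffunE (negbTE zi).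
apply/treeP; split.
- move=> x hx; rewrite ffunE; case: eqP => [xi|_]; first by move: hx; rewrite xi hi.
  by apply: h1; rewrite in_setD1 (negbTE hx) andbF.
- move=> x y; rewrite ffunE; case: eqP => [_ [<-]|_ /h2]; first by move: hj; rewrite in_setD1 => /andP[].
  by rewrite in_setD1 => /andP[].
- rewrite -h3; apply: eq_card => x; rewrite !inE ffunE.
  by case: (eqVneq x i) => [->|xi] /=; [rewrite andbF | ].
- move=> x; case: (eqVneq x i) => [->|xi]; last by rewrite agree // h4.
  apply: (@iter_none _ _ #|D|.+1); rewrite iterSr /= ffunE eqxx agree ?h4 //.
  by move: hj; rewrite in_setD1 => /andP[].
Qed.


Lemma card_fiber (T U : finType) (S : {set T}) (f : T -> U) :
  #|S| = (\sum_u #|[set t in S | f t == u]|)%N.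
Proof.
rewrite -sum1_card (partition_big f xpredT) //=; apply: eq_bigr => u _.
by rewrite -sum1_card; apply: eq_bigl => t; rewrite !inE.
Qed.

Lemma exists_zero A (e : D -> nat) n : #|A| = n.+1 -> (\sum_x e x = n)%N ->
  exists2 i, i \in A & e i = 0%N.
Proof.
move=> hA he.
case: (pickP (fun x => (x \in A) && (e x == 0%N))) => [x /andP[hx /eqP hex]| h].
  by exists x.
have : (#|A| <= \sum_x e x)%N.
  rewrite -sum1_card (leq_trans _ (_ : \sum_(x in A) e x <= _))%N //.
    by apply: leq_sum => x hx; move: (h x); rewrite hx /= lt0n => ->.
  by rewrite [X in (_ <= X)%N](bigID (fun x => x \in A)) /= leq_addr.
by rewrite hA he ltnn.
Qed.

Definition treeS A (e : D -> nat) :=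
  [set par | tree_on A par && [forall x, nch par x == e x]].

Lemma tree_card n : forall A (e : D -> nat), #|A| = n.+1 ->
  (forall x, x \notin A -> e x = 0%N) -> (\sum_x e x = n)%N ->
  (#|treeS A e| * \prod_x (e x)`! = n`!)%N.
Proof.
elim: n => [|n IH] A e hA hout hsum.
  have e0 : forall x, e x = 0%N.
    by move: hsum => /eqP; rewrite sum_nat_eq0 => /forallP h x; apply/eqP; apply: (h x).
  rewrite big1 ?muln1; last by move=> x _; rewrite e0.
  move/eqP: hA => /cards1P [a ha].
  have -> : treeS A e = [set [ffun => None]].
    apply/setP => par; rewrite !inE; apply/idP/idP.
      case/andP => /treeP [h1 h2 h3 h4] _; apply/eqP/ffunP => x; rewrite ffunE.
      case: (eqVneq x a) => [->|xa]; last by apply: h1; rewrite ha inE.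
      case E: (par a) => [y|] //.
      have : y \in A by apply: h2 E.
      rewrite ha inE => /eqP ya; rewrite ya in E.
      by have := loop_not_tree E; rewrite h4.
    move/eqP => ->; apply/andP; split.
      apply/treeP; split.
      - by move=> x _; rewrite ffunE.
      - by move=> x y; rewrite ffunE.
      - by rewrite -(cards1 a) -ha; apply: eq_card => x; rewrite !inE ffunE eqxx andbT.
      - by move=> x; apply: (@iter_none _ _ 1); rewrite /= ffunE.
    apply/forallP => x; rewrite e0 /nch; apply/eqP; apply: eq_card0 => y.
    by rewrite !inE ffunE.
  by rewrite cards1.
have [i hiA hei] := exists_zero hA hsum.
rewrite (card_fiber _ (fun par => odflt i (par i))) big_distrl /=.
have hA2 : (1 < #|A|)%N by rewrite hA.
have hAi : #|A :\ i| = n.+1 by move: hA; rewrite (cardsD1 i A) hiA add1n => [[]].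
have step : forall j, (#|[set t in treeS A e | odflt i (t i) == j]| * \prod_x (e x)`! = e j * n`!)%N.
  move=> j.
  have parent : forall par, par \in treeS A e -> odflt i (par i) == j -> par i = Some j.
    move=> par; rewrite inE => /andP[ht /forallP hn] hj.
    have : par i != None by apply: leaf_not_root ht hiA _ hA2; rewrite (eqP (hn i)).
    by case: (par i) hj => //= y /eqP -> .
  case Ej: (e j) => [|m].
    rewrite mul0n; apply/eqP; rewrite muln_eq0; apply/orP; left; apply/eqP.
    apply: eq_card0 => par; rewrite inE; apply/negP => /andP [hpar hj].
    have hpj := parent par hpar hj.
    move: hpar; rewrite inE => /andP [_ /forallP /(_ j)].
    by rewrite Ej => /eqP h0; move: (nch_parent hpj); rewrite h0.
  pose e' x := (e x - (x == j))%N.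
  have jA : j \in A by apply/negPn/negP => hjA; move: (hout j hjA); rewrite Ej.
  have ji : j != i by apply/negP => /eqP ji; move: hei; rewrite -ji Ej.
  have jAi : j \in A :\ i by rewrite in_setD1 ji jA.
  have hout' : forall x, x \notin A :\ i -> e' x = 0%N.
    move=> x; rewrite /e' in_setD1 negb_and negbK => /orP [/eqP ->|/hout ->] //.
    by rewrite hei.
  have prod_split : forall f : D -> nat, (\prod_x f x = f j * \prod_(x | x != j) f x)%N.
    by move=> f; rewrite (bigD1 j).
  have hsum' : (\sum_x e' x = n)%N.
    move: hsum; rewrite (bigD1 j) //= Ej addSn => [[hs]].
    rewrite (bigD1 j) //= /e' eqxx Ej subn1 /= -hs; congr (_ + _)%N.
    by apply: eq_bigr => x /negbTE ->; rewrite subn0.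
  have IH' := IH _ _ hAi hout' hsum'.
  have -> : [set t in treeS A e | odflt i (t i) == j] = addv i j @: treeS (A :\ i) e'.
    apply/setP => par; apply/idP/imsetP.
      rewrite inE => /andP [hpar hj].
      have hpj := parent par hpar hj.
      move: hpar; rewrite inE => /andP [ht /forallP hn].
      exists (remv i par).
        rewrite inE; apply/andP; split; first by apply: remv_tree ht hiA _ hpj; rewrite (eqP (hn i)).
        apply/forallP => x; rewrite /e' -(eqP (hn x)) (nch_remv i par x) hpj.
        by rewrite eq_sym [Some j == _]eq_sym addnK.
      apply/ffunP => x; rewrite !ffunE; case: eqP => [->|] //.
    case=> par' hpar' ->.
    move: hpar'; rewrite [par' \in _]inE => /andP [ht /forallP hn].
    have pi : par' i = None by move: ht => /treeP [h1 _ _ _]; apply: h1; rewrite in_setD1 eqxx.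
    rewrite !inE ffunE eqxx eqxx andbT; apply/andP; split; first exact: addv_tree.
    apply/forallP => x; rewrite (nch_remv i _ x).
    have -> : remv i (addv i j par') = par'.
      by apply/ffunP => y; rewrite !ffunE; case: eqP => // ->.
    rewrite (eqP (hn x)) ffunE eqxx /e'; case: (eqVneq x j) => [->|xj].
      by rewrite eqxx Ej subn1 addn1.
    by rewrite subn0 (inj_eq (@Some_inj _)) [j == x]eq_sym (negbTE xj) addn0.
  rewrite card_in_imset; last first.
    move=> p1 p2; rewrite !inE => /andP [/treeP [h1 _ _ _] _] /andP [/treeP [h1' _ _ _] _] heq.
    apply/ffunP => x; case: (eqVneq x i) => [->|xi].
      by rewrite h1 ?h1' // in_setD1 eqxx.
    by have := congr1 (fun f : {ffun D -> option D} => f x) heq; rewrite !ffunE (negbTE xi).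
  rewrite -IH' (prod_split (fun x => (e x)`!)) (prod_split (fun x => (e' x)`!)) /=.
  rewrite Ej /e' eqxx subn1 /= factS.
  rewrite [in RHS](eq_bigr (fun x => (e x)`!)); last by move=> x /negbTE ->; rewrite subn0.
  rewrite Ej /=; lia.
rewrite (eq_bigr _ (fun j _ => step j)) -big_distrl /= hsum factS.
by [].
Qed.

End Comb.

Section FunCount.
Variables D B : finType.
Implicit Types (g : {ffun D -> option B}) (A : {set D}).

Definition fib g b := #|[set x | g x == Some b]|.
Definition funS A (d : B -> nat) :=
  [set g : {ffun D -> option B} | [forall x, (g x == None) == (x \notin A)] && [forall b, fib g b == d b]].
Definition remg a g : {ffun D -> option B} := [ffun x => if x == a then None else g x].
Definition addg a b g : {ffun D -> option B} := [ffun x => if x == a then Some b else g x].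

Lemma fib_remg a g b : fib g b = fib (remg a g) b + (g a == Some b).
Proof.
rewrite /fib (cardsD1 a) addnC; congr (_ + _); last by rewrite inE.
apply: eq_card => y; rewrite !inE ffunE.
by case: (y == a).
Qed.

Lemma card_setE (T : finType) (P : pred T) : #|[set x | P x]| = (\sum_x P x)%N.
Proof.
rewrite -sum1_card big_mkcond /=; apply: eq_bigr => x _.
by rewrite inE; case: (P x).
Qed.

Lemma fib_sum g : (\sum_b fib g b = #|[set x | g x != None]|)%N.
Proof.
rewrite /fib (eq_bigr _ (fun b _ => card_setE _)) exchange_big card_setE /=.
apply: eq_bigr => x _; case: (g x) => [c|] /=; last by rewrite big1.
rewrite (bigD1 c) //= eqxx big1 // => b /negbTE.
by rewrite (inj_eq (@Some_inj _)) eq_sym => ->.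
Qed.

Lemma fun_card n : forall A (d : B -> nat), #|A| = n -> (\sum_b d b = n)%N ->
  (#|funS A d| * \prod_b (d b)`! = n`!)%N.
Proof.
elim: n => [|n IH] A d hA hsum.
  have d0 : forall b, d b = 0%N.
    by move: hsum => /eqP; rewrite sum_nat_eq0 => /forallP h b; apply/eqP; apply: (h b).
  rewrite big1 ?muln1; last by move=> b _; rewrite d0.
  move/eqP: hA; rewrite cards_eq0 => /eqP hA.
  have -> : funS A d = [set [ffun => None]].
    apply/setP => g; rewrite !inE; apply/idP/idP.
      case/andP => /forallP h1 _; apply/eqP/ffunP => x; rewrite ffunE.
      by apply/eqP; move: (h1 x); rewrite hA inE /= => /eqP ->.
    move/eqP => ->; apply/andP; split.
      by apply/forallP => x; rewrite ffunE hA inE.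
    apply/forallP => b; rewrite d0 /fib; apply/eqP; apply: eq_card0 => y.
    by rewrite !inE ffunE.
  by rewrite cards1.
have : (0 < #|A|)%N by rewrite hA.
case/card_gt0P => a haA.
have [b0 _] : exists2 b0 : B, true & true.
  have : (0 < \sum_b d b)%N by rewrite hsum.
  by rewrite lt0n sum_nat_eq0 => /forallPn [b _]; exists b.
rewrite (card_fiber _ (fun g => odflt b0 (g a))) big_distrl /=.
have hAa : #|A :\ a| = n by move: hA; rewrite (cardsD1 a A) haA add1n => [[]].
have step : forall b, (#|[set t in funS A d | odflt b0 (t a) == b]| * \prod_b (d b)`! = d b * n`!)%N.
  move=> b.
  have val : forall g, g \in funS A d -> odflt b0 (g a) == b -> g a = Some b.
    move=> g; rewrite inE => /andP[/forallP h1 _] hb.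
    move: (h1 a); rewrite haA /=.
    by case: (g a) hb => //= y /eqP ->.
  case Eb: (d b) => [|m].
    rewrite mul0n; apply/eqP; rewrite muln_eq0; apply/orP; left; apply/eqP.
    apply: eq_card0 => g; rewrite inE; apply/negP => /andP [hg hb].
    have hgb := val g hg hb.
    move: hg; rewrite inE => /andP [_ /forallP /(_ b)].
    rewrite Eb /fib => /eqP h0.
    have : (0 < #|[set x | g x == Some b]|)%N by apply/card_gt0P; exists a; rewrite inE hgb.
    by rewrite h0.
  pose d' c := (d c - (c == b))%N.
  have prod_split : forall f : B -> nat, (\prod_c f c = f b * \prod_(c | c != b) f c)%N.
    by move=> f; rewrite (bigD1 b).
  have hsum' : (\sum_c d' c = n)%N.
    move: hsum; rewrite (bigD1 b) //= Eb addSn => [[hs]].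
    rewrite (bigD1 b) //= /d' eqxx Eb subn1 /= -hs; congr (_ + _)%N.
    by apply: eq_bigr => x /negbTE ->; rewrite subn0.
  have IH' := IH _ _ hAa hsum'.
  have -> : [set t in funS A d | odflt b0 (t a) == b] = addg a b @: funS (A :\ a) d'.
    apply/setP => g; apply/idP/imsetP.
      rewrite inE => /andP [hg hb].
      have hgb := val g hg hb.
      move: hg; rewrite inE => /andP [/forallP h1 /forallP hn].
      exists (remg a g).
        rewrite inE; apply/andP; split.
          apply/forallP => x; rewrite ffunE in_setD1 negb_and negbK.
          by case: (eqVneq x a) => [->|xa] //=; rewrite (eqP (h1 x)).
        apply/forallP => c; rewrite /d' -(eqP (hn c)) (fib_remg a g c) hgb.
        by rewrite (inj_eq (@Some_inj _)) [b == c]eq_sym addnK.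
      apply/ffunP => x; rewrite !ffunE; case: eqP => [->|] //.
    case=> g' hg' ->.
    move: hg'; rewrite [g' \in _]inE => /andP [/forallP h1 /forallP hn].
    have ga : g' a = None by apply/eqP; rewrite (eqP (h1 a)) in_setD1 eqxx.
    rewrite !inE ffunE eqxx eqxx andbT; apply/andP; split.
      apply/forallP => x; rewrite ffunE; case: (eqVneq x a) => [->|xa] /=; first by rewrite haA.
      by rewrite (eqP (h1 x)) in_setD1 xa.
    apply/forallP => c; rewrite (fib_remg a _ c).
    have -> : remg a (addg a b g') = g'.
      by apply/ffunP => y; rewrite !ffunE; case: eqP => // ->.
    rewrite (eqP (hn c)) ffunE eqxx /d'; case: (eqVneq c b) => [->|cb].
      by rewrite eqxx Eb subn1 addn1.
    by rewrite subn0 (inj_eq (@Some_inj _)) [b == c]eq_sym (negbTE cb) addn0.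
  rewrite card_in_imset; last first.
    move=> p1 p2; rewrite !inE => /andP [/forallP h1 _] /andP [/forallP h1' _] heq.
    apply/ffunP => x; case: (eqVneq x a) => [->|xa].
      have e1 : p1 a = None by apply/eqP; rewrite (eqP (h1 a)) in_setD1 eqxx.
      have e2 : p2 a = None by apply/eqP; rewrite (eqP (h1' a)) in_setD1 eqxx.
      by rewrite e1 e2.
    by have := congr1 (fun f : {ffun D -> option B} => f x) heq; rewrite !ffunE (negbTE xa).
  rewrite -IH' (prod_split (fun x => (d x)`!)) (prod_split (fun x => (d' x)`!)) /=.
  rewrite /d' eqxx Eb subn1 /= factS.
  rewrite [in RHS](eq_bigr (fun x => (d x)`!)); last by move=> x /negbTE ->; rewrite subn0.
  lia.
rewrite (eq_bigr _ (fun b _ => step b)) -big_distrl /= hsum factS.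
by [].
Qed.

End FunCount.

Lemma tree_sum (D : finType) (A : {set D}) par : tree_on A par ->
  (\sum_x nch par x = #|A| - 1)%N.
Proof.
case/treeP => h1 h2 h3 h4.
have -> : (\sum_x nch par x = \sum_x fib par x)%N by [].
rewrite fib_sum.
have -> : [set y | par y != None] = A :\: [set x in A | par x == None].
  apply/setP => y; rewrite !inE; case: (boolP (y \in A)) => hy /=; first by rewrite andbT.
  by rewrite h1.
rewrite cardsD (setIidPr _) ?h3 //.
by apply/subsetP => x; rewrite inE => /andP[].
Qed.


Import GRing.Theory.
Local Open Scope ring_scope.

Lemma tri_exch (R : nmodType) (F : nat -> nat -> R) K :
  \sum_(i < K.+1) \sum_(l < i.+1) F l (i - l)%N =
  \sum_(l < K.+1) \sum_(j < (K - l).+1) F l j.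
Proof.
transitivity (\sum_(i < K.+1) \sum_(l < K.+1 | (l <= i)%N) F l (i - l)%N).
  by apply: eq_bigr => i _; rewrite (big_ord_widen K.+1 (fun l => F l (i - l)%N)) ?ltn_ord.
rewrite (exchange_big_dep xpredT) //=; apply: eq_bigr => l _.
rewrite -(big_mkord (fun i => (l <= i)%N) (fun i => F l (i - l)%N)).
rewrite (big_cat_nat (n:=l)) //=; last by rewrite ltnW ?ltn_ord.
rewrite big_nat_cond big1 ?add0r; last by move=> i /andP[/andP[_ ]]; rewrite ltnNge => /negbTE ->.
rewrite big_nat_cond.
rewrite -(add0n l) big_addn add0n.
have -> : (K.+1 - l = (K - l).+1)%N by rewrite subSn // -ltnS ltn_ord.
rewrite big_mkord; apply: eq_big => [j|j _]; last by rewrite addnK.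
have lK : (l <= K)%N by rewrite -ltnS ltn_ord.
by rewrite leq_addl /= addnC -ltn_subRL subSn // ltn_ord.
Qed.

Lemma tri_sym (R : nmodType) (F : nat -> nat -> R) K :
  \sum_(a < K.+1) \sum_(b < (K - a).+1) F a b =
  \sum_(b < K.+1) \sum_(a < (K - b).+1) F a b.
Proof.
transitivity (\sum_(a < K.+1) \sum_(b < K.+1 | (a + b <= K)%N) F a b).
  apply: eq_bigr => a _; rewrite (big_ord_widen K.+1 (F a)) ?ltnS ?leq_subr //.
  by apply: eq_bigl => b; rewrite ltnS leq_subRL // -ltnS ltn_ord.
rewrite (exchange_big_dep xpredT) //=; apply: eq_bigr => b _.
rewrite (big_ord_widen K.+1 (fun a => F a b)) ?ltnS ?leq_subr //.
apply: eq_bigl => a; rewrite ltnS leq_subRL //; last by rewrite -ltnS ltn_ord.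
by rewrite addnC.
Qed.

Section AlgPart.
Variable R : comUnitRingType.
Hypothesis hQ : forall n : nat, (n.+1)%:R \is a @GRing.unit R.
Variable p : {poly R}.

Definition a m k := (p ^+ m)`_k.
Definition A y i := a (y + i) i.
Definition Q x y M := \sum_(i < M.+1) A x i * A y (M - i).
Definition c l := p`_l.+1 *+ l.+1.
Definition Lp j := a j.+1 j / (j.+1)%:R.
Definition LHS y K := \sum_(i < K.+1) A y i * Lp (K - i).

Lemma a_succ m k : a m.+1 k = \sum_(l < k.+1) p`_l * a m (k - l).
Proof. by rewrite /a exprS coefM. Qed.

Lemma a0 m : a m 0 = p`_0 ^+ m.
Proof. by elim: m => [|m IH]; rewrite /a ?expr0 ?coef1 // exprS coef0M -/(a m 0) IH exprS. Qed.

Lemma A_succ y i : A y.+1 i = \sum_(l < i.+1) p`_l * A (y + l) (i - l).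
Proof.
rewrite /A addSn a_succ; apply: eq_bigr => l _; congr (_ * a _ _).
by rewrite -addnA subnKC // -ltnS ltn_ord.
Qed.

Lemma Q_sym x y M : Q x y M = Q y x M.
Proof.
rewrite /Q (reindex_inj rev_ord_inj) /=; apply: eq_bigr => i _.
by rewrite subSS subKn 1?mulrC // -ltnS ltn_ord.
Qed.

Lemma Q_succl x y M : Q x.+1 y M = \sum_(l < M.+1) p`_l * Q (x + l) y (M - l).
Proof.
rewrite /Q.
transitivity (\sum_(i < M.+1) \sum_(l < i.+1)
   (fun l j => p`_l * A (x + l) j * A y (M - l - j)%N) l (i - l)%N).
  apply: eq_bigr => i _; rewrite A_succ mulr_suml; apply: eq_bigr => l _ /=.
  by rewrite -subnDA subnKC // -ltnS ltn_ord.
rewrite (tri_exch (fun l j => p`_l * A (x + l) j * A y (M - l - j)%N)).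
apply: eq_bigr => l _; rewrite mulr_sumr.
by apply: eq_bigr => j _; rewrite mulrA.
Qed.

Lemma Q_shift_gen M : (forall x y, Q x.+1 y M = Q x y.+1 M) ->
  forall r x y, Q (x + r) y M = Q x (y + r) M.
Proof.
move=> H; elim=> [|r IH] x y; first by rewrite !addn0.
by rewrite !addnS H IH addSn.
Qed.

Lemma Q_shift M x y : Q x.+1 y M = Q x y.+1 M.
Proof.
elim: M {-2}M (leqnn M) x y => [|n IH] M hM x y.
  by move: hM; rewrite leqn0 => /eqP ->; rewrite /Q !big_ord1 /A !addn0 !a0 !exprS -mulrA mulrCA.
rewrite Q_succl Q_sym Q_succl; apply: eq_bigr => l _.
case: l => [[|l]] hl /=.
  by rewrite !addn0 subn0 [in RHS]Q_sym.
rewrite [in RHS]Q_sym; congr (_ * _); apply: Q_shift_gen.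
by move=> x' y'; apply: IH; rewrite leq_subLR (leq_trans hM) // addSn ltnS leq_addl.
Qed.

Lemma Q_shiftr r x y M : Q (x + r) y M = Q x (y + r) M.
Proof. by apply: Q_shift_gen => x' y'; apply: Q_shift. Qed.

Lemma a_deriv m k : a m k.+1 *+ k.+1 = (\sum_(l < k.+1) c l * a m.-1 (k - l)) *+ m.
Proof.
have := congr1 (fun q : {poly R} => q`_k) (deriv_exp p m).
rewrite /= coef_deriv coefMn coefM => ->.
by congr (_ *+ _); apply: eq_bigr => l _; rewrite coef_deriv.
Qed.

Lemma A_deriv y i :
  A y i.+1 *+ i.+1 = (\sum_(l < i.+1) c l * A (y + l) (i - l)) *+ (y + i).+1.
Proof.
rewrite /A a_deriv addnS /=; congr (_ *+ _); apply: eq_bigr => l _.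
by rewrite -addnA subnKC // -ltnS ltn_ord.
Qed.

Lemma Lp_mul j : Lp j *+ j.+1 = A 1 j.
Proof. by rewrite /Lp /A add1n -mulr_natr divrK. Qed.

Lemma Lp_deriv j : Lp j.+1 *+ j.+1 = \sum_(l < j.+1) c l * A l.+1 (j - l).
Proof.
have h := a_deriv j.+2 j.
rewrite /Lp -mulrnAl h -mulr_natr mulrK //; apply: eq_bigr => l _.
by rewrite /A addSn subnKC // -ltnS ltn_ord.
Qed.


Lemma LHS_deriv y k :
  LHS y k.+1 *+ k.+1 = (\sum_(l < k.+1) c l * LHS (y + l) (k - l)) *+ (y.+1 + k).+1.
Proof.
pose G l j := c l * A (y + l) j * Lp (k - l - j) *+ (y + l + j).+1.
pose P1 := \sum_(l < k.+1) \sum_(j < (k - l).+1) G l j.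
pose P2 := \sum_(l < k.+1) c l * Q y l.+1 (k - l).
transitivity (P1 + P2).
  rewrite /LHS -sumrMnl.
  transitivity (\sum_(i < k.+2) ((A y i *+ i) * Lp (k.+1 - i)
                  + A y i * (Lp (k.+1 - i) *+ (k.+1 - i)))).
    apply: eq_bigr => i _; rewrite mulrnAl mulrnAr -mulrnDr subnKC //.
    by rewrite -ltnS ltn_ord.
  rewrite big_split /=; congr (_ + _).
    rewrite big_ord_recl /= mulr0n mul0r add0r.
    transitivity (\sum_(i < k.+1) \sum_(l < i.+1) G l (i - l)%N); last exact: tri_exch.
    apply: eq_bigr => i _; rewrite /bump /= add1n subSS A_deriv mulrnAl mulr_suml -sumrMnl.
    apply: eq_bigr => l _; have li : (l <= i)%N by rewrite -ltnS ltn_ord.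
    by rewrite /G -subnDA subnKC // -addnA subnKC.
  rewrite big_ord_recr /= subnn mulr0n mulr0 addr0.
  transitivity (\sum_(i < k.+1) \sum_(l < (k - i).+1) A y i * (c l * A l.+1 (k - i - l))).
    apply: eq_bigr => i _; rewrite subSn; last by rewrite -ltnS ltn_ord.
    by rewrite Lp_deriv mulr_sumr.
  rewrite (tri_sym (fun i l => A y i * (c l * A l.+1 (k - i - l)))).
  apply: eq_bigr => l _; rewrite /Q mulr_sumr; apply: eq_bigr => i _.
  by rewrite mulrCA subnAC.
rewrite -sumrMnl /P1 /P2 -big_split /=; apply: eq_bigr => l _.
have hl : (l <= k)%N by rewrite -ltnS ltn_ord.
have -> : Q y l.+1 (k - l) = Q (y + l) 1 (k - l) by rewrite (Q_shiftr l y 1) add1n.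
rewrite /Q /LHS !mulr_sumr -sumrMnl -big_split /=.
apply: eq_bigr => j _.
have hj : (j <= k - l)%N by rewrite -ltnS ltn_ord.
have -> : ((y.+1 + k).+1 = (y + l + j).+1 + (k - l - j).+1)%N.
  by lia.
rewrite mulrnDr /G; congr (_ + _); first by rewrite mulrA.
by rewrite -Lp_mul !mulrnAr.
Qed.

Lemma LHS_eq K y : LHS y K = A y.+1 K.
Proof.
elim: K {-2}K (leqnn K) y => [|n IH] K hK y.
  move: hK; rewrite leqn0 => /eqP ->.
  by rewrite /LHS big_ord1 /= /Lp /A !addn0 divr1 !a0 exprS subnn expr0 mulr1 mulrC -exprS.
case: K hK => [|k] hK.
  by rewrite /LHS big_ord1 /= /Lp /A !addn0 divr1 !a0 exprS subnn expr0 mulr1 mulrC -exprS.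
apply: (@mulIr _ (k.+1)%:R); first exact: hQ.
rewrite !mulr_natr LHS_deriv A_deriv.
congr (_ *+ _); apply: eq_bigr => l _; rewrite IH ?addSn //.
by rewrite -ltnS (leq_trans _ hK) // ltnS leq_subr.
Qed.

End AlgPart.

Lemma spow_poly (R : comNzRingType) (phi : nat -> R) N m k : (k < N)%N ->
  spow phi m k = ((\poly_(j < N) phi j) ^+ m)`_k.
Proof.
elim: m k => [|m IH] k hk.
  by rewrite /spow /= expr0 coef1 /sone; case: (k == 0%N).
rewrite /spow iterS -/(spow phi m) exprS coefM /smul; apply: eq_bigr => i _.
rewrite coef_poly IH; last by rewrite (leq_ltn_trans (leq_subr _ _)).
by rewrite (leq_ltn_trans _ hk) // -ltnS ltn_ord.
Qed.

Lemma prod_monom (R : comNzRingType) (I : finType) (P : pred I) (c : I -> R) (n : I -> nat) :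
  \prod_(i | P i) (c i *: 'X^(n i)) = (\prod_(i | P i) c i) *: 'X^(\sum_(i | P i) n i).
Proof.
apply: (big_rec3 (fun (z : {poly R}) x y => z = x *: 'X^y)); first by rewrite scale1r.
move=> i z x y _ ->.
by rewrite exprD -scalerAl -scalerAr scalerA.
Qed.

Lemma poly_pow_sum (R : comNzRingType) (phi : nat -> R) b m k :
  ((\poly_(j < b) phi j) ^+ m)`_k =
  \sum_(e : {ffun 'I_m -> 'I_b} | (\sum_x (e x : nat) == k)%N) \prod_x phi (e x).
Proof.
have -> : (\poly_(j < b) phi j) ^+ m = \prod_(x : 'I_m) \sum_(j : 'I_b) phi j *: 'X^j.
  by rewrite prodr_const card_ord poly_def.
rewrite bigA_distr_bigA /=.
rewrite (eq_bigr (fun e : {ffun 'I_m -> 'I_b} => (\prod_x phi (e x)) *: 'X^(\sum_x (e x : nat))));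
  last by move=> e _; rewrite prod_monom.
by rewrite coef_sumMXn.
Qed.

Lemma fvec_ok n (f : 'I_n -> option 'I_n) x : (#|[set y | f y == x]| < n.+1)%N.
Proof. by rewrite ltnS (leq_trans (max_card _)) // card_ord. Qed.

Definition fvec n (f : {ffun 'I_n -> 'I_n}) : {ffun 'I_n -> 'I_n.+1} :=
  [ffun x => inord #|[set y | f y == x]|].

Lemma fvecP n (f : {ffun 'I_n -> 'I_n}) (e : {ffun 'I_n -> 'I_n.+1}) :
  (fvec f == e) = [forall x, #|[set y | f y == x]| == e x].
Proof.
apply/eqP/forallP => [<- x|h]; first by rewrite ffunE inordK // ltnS (leq_trans (max_card _)) // card_ord.
apply/ffunP => x; rewrite ffunE; apply/val_inj => /=; rewrite inordK ?(eqP (h x)) //.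
Qed.

Lemma fun_count_sum P n : fun_count P n =
  (\sum_(e : {ffun 'I_n -> 'I_n.+1})
     [forall x, P (e x)] * #|funS [set: 'I_n] (fun x => (e x : nat))|)%N.
Proof.
rewrite /fun_count (card_fiber _ (@fvec n)); apply: eq_bigr => e _.
case: (boolP [forall x, P (e x)]) => hP; last first.
  rewrite mul0n; apply: eq_card0 => f; rewrite !inE fvecP; apply/negP => /andP[/forallP h1 /forallP h2].
  by move/negP: hP; apply; apply/forallP => x; rewrite -(eqP (h2 x)) h1.
rewrite mul1n.
pose hS (f : {ffun 'I_n -> 'I_n}) : {ffun 'I_n -> option 'I_n} := [ffun x => Some (f x)].
have hSinj : injective hS.
  by move=> f1 f2 heq; apply/ffunP => x; have := congr1 (fun g : {ffun _ -> _} => g x) heq; rewrite !ffunE => [[]].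
rewrite -(card_imset _ hSinj); apply: eq_card => g; apply/imsetP/idP.
  case=> f; rewrite !inE fvecP => /andP[_ /forallP h] ->.
  apply/andP; split; apply/forallP => x.
    by rewrite ffunE inE.
  rewrite -(eqP (h x)) /fib; apply/eqP/eq_card => y; rewrite !inE ffunE.
  by rewrite (inj_eq (@Some_inj _)).
rewrite inE => /andP[/forallP h1 /forallP h2].
have gS : forall x, g x = Some (odflt x (g x)).
  by move=> x; move: (h1 x); rewrite inE /=; case: (g x).
have hfib : forall x, #|[set y | [ffun y => odflt y (g y)] y == x]| = fib g x.
  move=> x; apply/eq_card => y; rewrite !inE ffunE.
  by rewrite -(inj_eq (@Some_inj _)) -gS.
exists [ffun x => odflt x (g x)].
  rewrite !inE fvecP; apply/andP; split; apply/forallP => x; rewrite hfib (eqP (h2 x)) //.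
  exact: (forallP hP x).
by apply/ffunP => x; rewrite !ffunE -gS.
Qed.

Lemma tree_on_rooted n (par : {ffun 'I_n -> option 'I_n}) : tree_on [set: 'I_n] par = is_rooted_tree par.
Proof.
rewrite /tree_on /is_rooted_tree card_ord.
have -> : [forall x, (x \notin [set: 'I_n]) ==> (par x == None)] by apply/forallP => x; rewrite inE.
have -> : [forall x, forall y, (par x == Some y) ==> (y \in [set: 'I_n])].
  by apply/forallP => x; apply/forallP => y; rewrite inE implybT.
by rewrite /= (eq_card (B := [set x | par x == None])) // => x; rewrite !inE.
Qed.

Definition nvec n (par : {ffun 'I_n -> option 'I_n}) : {ffun 'I_n -> 'I_n.+1} :=
  [ffun x => inord (nch par x)].

Lemma nvecP n (par : {ffun 'I_n -> option 'I_n}) (e : {ffun 'I_n -> 'I_n.+1}) :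
  (nvec par == e) = [forall x, nch par x == e x].
Proof.
have lt : forall x, (nch par x < n.+1)%N by move=> x; rewrite ltnS (leq_trans (max_card _)) // card_ord.
apply/eqP/forallP => [<- x|h]; first by rewrite ffunE inordK.
apply/ffunP => x; rewrite ffunE; apply/val_inj => /=; rewrite inordK ?(eqP (h x)) //.
Qed.

Lemma tree_count_sum P n : tree_count P n =
  (\sum_(e : {ffun 'I_n -> 'I_n.+1})
     [forall x, P (e x)] * #|treeS [set: 'I_n] (fun x => (e x : nat))|)%N.
Proof.
rewrite /tree_count (card_fiber _ (@nvec n)); apply: eq_bigr => e _.
case: (boolP [forall x, P (e x)]) => hP; last first.
  rewrite mul0n; apply: eq_card0 => par; rewrite !inE nvecP; apply/negP => /andP[/andP[_ /forallP h1] /forallP h2].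
  by move/negP: hP; apply; apply/forallP => x; rewrite -(eqP (h2 x)); apply: h1.
rewrite mul1n; apply: eq_card => par; rewrite !inE nvecP tree_on_rooted.
case: (is_rooted_tree par) => //=.
case: (boolP [forall x, nch par x == e x]) => [/forallP h|]; rewrite ?andbT ?andbF //.
by apply/forallP => x; rewrite /nchildren -/(nch par x) (eqP (h x)); apply: (forallP hP x).
Qed.

Section Final.
Variable R : comUnitRingType.
Hypothesis hQ : forall n : nat, (n.+1)%:R \is a @GRing.unit R.
Variable P : pred nat.

Lemma unit_nat m : (0 < m)%N -> (m%:R : R) \is a GRing.unit.
Proof. by case: m => // m _; exact: hQ. Qed.

Lemma unit_prodfact I (r : seq I) (f : I -> nat) : ((\prod_(x <- r) (f x)`!)%:R : R) \is a GRing.unit.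
Proof. by apply: unit_nat; rewrite prodn_gt0 // => x; rewrite fact_gt0. Qed.

Lemma prod_eP b n (e : {ffun 'I_n -> 'I_b}) : \prod_x eP R P (e x) =
  if [forall x, P (e x)] then ((\prod_x (e x)`!)%:R)^-1 else 0.
Proof.
case: (boolP [forall x, P (e x)]) => [/forallP hP|/forallPn [x hx]].
  rewrite natr_prod -prodrV; last by move=> i _; apply: unit_nat; rewrite fact_gt0.
  by apply: eq_bigr => i _; rewrite /eP hP.
by rewrite (bigD1 x) //= /eP (negbTE hx) mul0r.
Qed.

Lemma div_helper (x : nat) (B F : nat) : (x * B = F)%N -> (0 < B)%N -> (0 < F)%N ->
  (x%:R : R) / F%:R = (B%:R)^-1.
Proof.
move=> h hB hF.
have hx : (x%:R : R) = F%:R / B%:R by rewrite -h natrM mulrK // unit_nat.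
by rewrite hx mulrAC divrr ?mul1r // unit_nat.
Qed.

Lemma FP_spow n : FP R P n = spow (eP R P) n n.
Proof.
rewrite (spow_poly _ (N := n.+1)) // poly_pow_sum.
rewrite /FP fun_count_sum natr_sum mulr_suml [RHS]big_mkcond /=.
apply: eq_bigr => e _.
case: (eqVneq (\sum_x (e x : nat)) n) => hs.
  rewrite prod_eP; case: (boolP [forall x, P (e x)]) => hP; last by rewrite mul0n mul0r.
  rewrite mul1n; apply: div_helper; last by rewrite fact_gt0.
    by apply: fun_card; rewrite ?cardsT ?card_ord.
  by rewrite prodn_gt0 // => x; rewrite fact_gt0.
have -> : #|funS [set: 'I_n] (fun x => (e x : nat))| = 0%N.
  apply: eq_card0 => g; rewrite inE; apply/negP => /andP [/forallP h1 /forallP h2].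
  move/eqP: hs; apply.
  rewrite (eq_bigr (fun x => fib g x)); last by move=> x _; rewrite (eqP (h2 x)).
  rewrite fib_sum -[RHS](card_ord n) -cardsT; apply: eq_card => x; rewrite !inE.
  by move: (h1 x); rewrite inE /= => /eqP ->.
by rewrite muln0 mul0r.
Qed.

Lemma TP0 : TP R P 0 = 0.
Proof.
rewrite /TP /tree_count (_ : #|_| = 0%N) ?mul0r //; apply: eq_card0 => par.
rewrite inE; apply/negP => /andP [/andP [/eqP h _] _].
by move: (max_card [set x | par x == None]); rewrite h card_ord.
Qed.

Lemma TP_spow n : TP R P n.+1 = spow (eP R P) n.+1 n / n.+1%:R.
Proof.
rewrite (spow_poly _ (N := n.+2)) // poly_pow_sum.
rewrite /TP tree_count_sum natr_sum !mulr_suml [X in _ = X]big_mkcond /=.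
apply: eq_bigr => e _.
case: (eqVneq (\sum_x (e x : nat)) n) => hs.
  rewrite prod_eP; case: (boolP [forall x, P (e x)]) => hP; last by rewrite mul0n !mul0r.
  rewrite mul1n factS natrM invrM ?unit_nat ?fact_gt0 // mulrA.
  congr (_ * _); apply: div_helper; rewrite ?fact_gt0 //.
    by apply: tree_card; rewrite ?cardsT ?card_ord // => x; rewrite inE.
  by rewrite prodn_gt0 // => x; rewrite fact_gt0.
have -> : #|treeS [set: 'I_n.+1] (fun x => (e x : nat))| = 0%N.
  apply: eq_card0 => par; rewrite inE; apply/negP => /andP [ht /forallP h2].
  move/eqP: hs; apply.
  rewrite (eq_bigr (fun x => nch par x)); last by move=> x _; rewrite (eqP (h2 x)).
  by rewrite (tree_sum ht) cardsT card_ord subn1.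
by rewrite muln0 !mul0r.
Qed.

End Final.

Unset Implicit Arguments.

Theorem corollary5p6 (R : comUnitRingType)
    (hQ : forall n : nat, (n.+1)%:R \is a @GRing.unit R)
    (P : pred nat) (hP0 : P 0%N) :
  smul (FP R P) (TP R P) = smul (@sX R) (sderiv (TP R P)) /\
  (forall n : nat, FP R P n = spow (eP R P) n n).
Proof.
split; last by move=> n; apply: FP_spow.
apply: functional_extensionality => n.
case: n => [|k].
  by rewrite /smul !big_ord1 /= TP0 // mulr0 /sX /= mul0r.
have -> : smul (@sX R) (sderiv (TP R P)) k.+1 = sderiv (TP R P) k.
  rewrite /smul big_ord_recl /= /sX /= mul0r add0r big_ord_recl /= mul1r subn1 /=.
  by rewrite big1 ?addr0 // => i _; rewrite mul0r.
rewrite /sderiv TP_spow // mulrC divrK //.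
pose p := \poly_(j < k.+2) eP R P j.
rewrite /smul big_ord_recr /= subnn TP0 // mulr0 addr0.
change (smul (eP R P) (spow (eP R P) k) k) with (spow (eP R P) k.+1 k).
rewrite (spow_poly _ (N := k.+2)) // -/p.
transitivity (LHS p 0 k); last by rewrite LHS_eq // /A add1n.
apply: eq_bigr => i _.
have hi : (i <= k)%N by rewrite -ltnS ltn_ord.
rewrite subSn // (TP_spow hQ) (FP_spow hQ).
rewrite [spow _ i i](spow_poly _ (N := k.+2)) -/p; last by lia.
rewrite [spow _ _ (k - i)](spow_poly _ (N := k.+2)) -/p; last by lia.
by rewrite /A /Lp /a add0n.
Qed.
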